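(* Assume $m=2$, i.e. $\Theta=\{\theta_1,\theta_2\}$, and let $\varphi\in\Delta_1^2$. If there exists $f\in\mathcal{W}^\varphi$ with $f\in\mathcal{F}_{\mathrm{inf}}$, then for every $\widehat f\in\mathcal{W}^\varphi$, $\varphi$ is the unique $\psi\in\Delta_1^2$ satisfying $$\sum_{s=1}^2\big(C^{\theta_s}_p(\widehat f)-C^{\theta_s}_r(\widehat f)\big)\psi_s=0\ \text{ for all } p,r \text{ with } \widehat f_p,\widehat f_r>0,$$ $$\sum_{s=1}^2\big(C^{\theta_s}_p(\widehat f)-C^{\theta_s}_r(\widehat f)\big)\psi_s\le0\ \text{ for all } p,r \text{ with } \widehat f_p>0,\ \widehat f_r=0.$$
   Context: Let $\mathcal{G}=(\mathcal{V},\mathcal{E})$ be a finite directed graph with an origin $v_o$ and a destination $v_d$, and let $\mathcal{P}$ be the (finite) set of acyclic directed paths from $v_o$ to $v_d$, $n=|\mathcal{P}|$. The set of feasible path-flows is $\mathcal{H}=\{f\in\mathbb{R}^n_{\ge0}:\sum_{p\in\mathcal{P}}f_p=1\}$. For a path-flow $f$, the flow on edge $e_k$ is $f_{e_k}=\sum_{p\ni e_k}f_p$. There is a finite set of states $\Theta=\{\theta_1,\dots,\theta_m\}$; in each state $\theta_s$ each edge $e_k$ has a known cost function $C^{\theta_s}_{e_k}:\mathbb{R}_{\ge0}\to\mathbb{R}_{\ge0}$ that is continuous and strictly increasing. The cost of path $p$ in state $\theta_s$ is $C^{\theta_s}_p(f)=\sum_{e_k\in p}C^{\theta_s}_{e_k}(f_{e_k})$.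 For $\varphi\in\Delta_1^m:=\{x\in\mathbb{R}^m_{\ge0}:\sum_i x_i=1\}$ the expected cost of path $p$ is $C^\varphi_p(f)=\sum_{s}\varphi_sC^{\theta_s}_p(f)$. A flow $f\in\mathcal{H}$ is a $\varphi$-based Wardrop equilibrium ($\varphi$-WE) if for all $p$ with $f_p>0$ we have $C^\varphi_p(f)\le C^\varphi_r(f)$ for all $r\in\mathcal{P}$; $\mathcal{W}^\varphi$ denotes the set of $\varphi$-WE. For each $s$, $\varphi^{\theta_s}\in\Delta_1^m$ is the distribution with $\varphi^{\theta_s}_s=1$, and $\mathcal{W}^{\theta_s}:=\mathcal{W}^{\varphi^{\theta_s}}$. For $\varphi\in\Delta_1^m$, $\mathcal{R}^{\mathrm{use}}_\varphi=\{p\in\mathcal{P}:\exists f\in\mathcal{W}^\varphi,\ f_p>0\}$. In the two-state case, the set of informative flows is $$\mathcal{F}_{\mathrm{inf}}=\{f\in\mathcal{H}: f\notin\mathcal{W}^{\theta_1}\cup\mathcal{W}^{\theta_2},\ f_p>0\ \text{for all } p\in\mathcal{R}^{\mathrm{use}}_{\varphi^{\theta_1}}\}.$$ *)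

(* Defs.v *)
From HB Require Import structures.
From mathcomp Require Import all_boot all_order all_algebra.
From mathcomp Require Import all_classical all_reals all_analysis.
Set Implicit Arguments. Unset Strict Implicit. Unset Printing Implicit Defensive.
Import Order.TTheory GRing.Theory Num.Theory.
Local Open Scope ring_scope.

Section Network.
Variables (V E : finType) (src dst : E -> V) (vo vd : V).

(* A directed path given as its sequence of edges e_1 ... e_k:
   src e_1 = vo, dst e_i = src e_(i+1), dst e_k = vd,
   acyclic: the visited vertices vo, dst e_1, ..., dst e_k are pairwise distinct.
   (If vo = vd, the only such path is the empty one.) *)
Definition is_odpath (s : seq E) : bool :=
  [&& map src s == belast vo (map dst s),
      last vo (map dst s) == vd &
      uniq (vo :: map dst s)].

Definition uniq_edge_seqs : seq (seq E) :=
  undup (flatten (map (fun A : {set E} => permutations (enum (mem A))) (enum {: {set E}}))).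

Definition odpaths : seq (seq E) := [seq s <- uniq_edge_seqs | is_odpath s].
Definition path_t : finType := seq_sub odpaths.

Variable R : realType.

Definition edge_flow (f : {ffun path_t -> R}) (e : E) : R :=
  \sum_(p : path_t | e \in ssval p) f p.

Definition path_cost (c : E -> R -> R) (f : {ffun path_t -> R}) (p : path_t) : R :=
  \sum_(e <- ssval p) c e (edge_flow f e).

Variable m : nat.
Variable C : 'I_m -> E -> R -> R.

Definition simplex (phi : {ffun 'I_m -> R}) : Prop :=
  (forall s, 0 <= phi s) /\ \sum_s phi s = 1.

Definition feasible (f : {ffun path_t -> R}) : Prop :=
  (forall p, 0 <= f p) /\ \sum_p f p = 1.

Definition exp_cost (phi : {ffun 'I_m -> R}) (f : {ffun path_t -> R}) (p : path_t) : R :=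
  \sum_s phi s * path_cost (C s) f p.

Definition WE (phi : {ffun 'I_m -> R}) (f : {ffun path_t -> R}) : Prop :=
  feasible f /\
  forall p, 0 < f p -> forall r, exp_cost phi f p <= exp_cost phi f r.

Definition delta (s : 'I_m) : {ffun 'I_m -> R} := [ffun s' => (s' == s)%:R].

Definition Ruse (phi : {ffun 'I_m -> R}) (p : path_t) : Prop :=
  exists f, WE phi f /\ 0 < f p.

End Network.

Definition Finf (V E : finType) (src dst : E -> V) (vo vd : V) (R : realType)
  (C : 'I_2 -> E -> R -> R) (f : {ffun path_t src dst vo vd -> R}) : Prop :=
  feasible f /\
  ~ WE C (delta R ord0) f /\ ~ WE C (delta R (@Ordinal 2 1 isT)) f /\
  (forall p, Ruse C (delta R ord0) p -> 0 < f p).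

Definition belief_cond (V E : finType) (src dst : E -> V) (vo vd : V) (R : realType)
  (m : nat) (C : 'I_m -> E -> R -> R) (fh : {ffun path_t src dst vo vd -> R})
  (psi : {ffun 'I_m -> R}) : Prop :=
  (forall p r, 0 < fh p -> 0 < fh r ->
     \sum_s (path_cost (C s) fh p - path_cost (C s) fh r) * psi s = 0) /\
  (forall p r, 0 < fh p -> fh r = 0 ->
     \sum_s (path_cost (C s) fh p - path_cost (C s) fh r) * psi s <= 0).

(* Main.v *)
Require Import Defs.
From HB Require Import structures.
From mathcomp Require Import all_boot all_order all_algebra.
From mathcomp Require Import all_classical all_reals all_analysis.
From mathcomp Require Import lra.
Import Order.TTheory GRing.Theory Num.Theory.
Import numFieldNormedType.Exports.
Local Open Scope ring_scope.
Local Open Scope classical_set_scope.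

Module Aux.
Set Implicit Arguments. Unset Strict Implicit. Unset Printing Implicit Defensive.

Section Prim.
Variable R : realType.
Notation mu := (@lebesgue_measure R).
Variable c : R -> R.
Hypothesis ccont : {within `[0%R, +oo[, continuous c}.
Hypothesis cincr : forall x y, 0 <= x -> x < y -> c x < c y.

Definition prim (y : R) : R := \int[mu]_(t in `[0%R, y]) c t.

Lemma prim_int y : mu.-integrable `[0%R, y] (EFin \o c).
Proof.
apply: continuous_compact_integrable; first exact: segment_compact.
apply: continuous_subspaceW ccont => z /=; rewrite !in_itv /= => /andP[-> _] //.
Qed.

Lemma prim_diff x y : 0 <= x -> x <= y ->
  prim y - prim x = \int[mu]_(t in `]x, y]) c t.
Proof.
move=> x0 xy; rewrite /prim.
have := @Rintegral_itvB R c (BLeft 0) (BRight y) x (prim_int y).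
by rewrite !bnd_simp => ->.
Qed.

Lemma prim_sandwich x y : 0 <= x -> x <= y ->
  (y - x) * c x <= prim y - prim x <= (y - x) * c y.
Proof.
move=> x0 xy; rewrite prim_diff //.
have mI : measurable (`]x, y] : set R) by [].
have sI : `]x, y] `<=` `[0%R, y] by apply: subset_itvr; rewrite bnd_simp.
have iI : mu.-integrable `]x, y] (EFin \o c).
  apply: (integrableS _ _ _ (prim_int y)) => //.
have icst k : mu.-integrable `]x, y] (EFin \o (fun _ : R => k)).
  apply: (integrableS _ _ _ (_ : mu.-integrable `[0%R, y] _)) => //.
  apply: continuous_compact_integrable; first exact: segment_compact.
  by apply: continuous_subspaceT => z; exact: cst_continuous.
have muI : fine (mu `]x, y]) = y - x.
  rewrite lebesgue_measure_itv /= lte_fin; case: (ltP x y) => //= h.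
  have -> : y = x by apply/eqP; rewrite eq_le h xy.
  by rewrite subrr.
apply/andP; split.
- rewrite mulrC -muI -Rintegral_cst //; apply: le_Rintegral => //.
  move=> z /=; rewrite in_itv /= => /andP[xz zy].
  by apply/ltW/cincr.
- rewrite mulrC -muI -Rintegral_cst //; apply: le_Rintegral => //.
  move=> z /=; rewrite in_itv /= => /andP[xz zy].
  rewrite le_eqVlt in zy; case/predU1P: zy => [->//|zy].
  apply/ltW/cincr => //; apply: le_trans x0 (ltW xz).
Qed.

Lemma c_le x y : 0 <= x -> x <= y -> c x <= c y.
Proof.
move=> x0; rewrite le_eqVlt => /predU1P[->//|xy]; exact/ltW/cincr.
Qed.

Lemma prim_lip M a b : 0 <= a -> 0 <= b -> a <= M -> b <= M ->
  `|prim b - prim a| <= (`|c 0| + `|c M|) * `|b - a|.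
Proof.
wlog ab : a b / a <= b.
  move=> W a0 b0 aM bM; case: (leP a b) => h; first exact: W.
  by rewrite distrC [`|b - a|]distrC; apply: W => //; apply: ltW.
move=> a0 b0 aM bM.
have /andP[h1 h2] := prim_sandwich a0 ab.
have cb : forall z, 0 <= z -> z <= M -> `|c z| <= `|c 0| + `|c M|.
  move=> z z0 zM; have l1 := c_le (lexx 0) z0; have l2 := c_le z0 zM.
  have n1 := ler_norm (c M); have n2 := ler_norm (- c 0); rewrite normrN in n2.
  have n3 := normr_ge0 (c 0); have n4 := normr_ge0 (c M).
  rewrite ler_norml; apply/andP; split; lra.
have ba : 0 <= b - a by rewrite subr_ge0.
rewrite [`|b - a|]ger0_norm //.
have := cb a a0 aM; have := cb b b0 bM; rewrite [`|c b| <= _]ler_norml [`|c a| <= _]ler_norml => /andP[q1 q2] /andP[q3 q4].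
have m1 : 0 <= (b - a) * (c a + (`|c 0| + `|c M|)) by apply: mulr_ge0 => //; lra.
have m2 : 0 <= (b - a) * ((`|c 0| + `|c M|) - c b) by apply: mulr_ge0 => //; lra.
rewrite mulrDr in m1; rewrite mulrBr in m2; rewrite ler_norml [(`|c 0| + `|c M|) * _]mulrC; apply/andP; split; lra.
Qed.

Lemma max0_lip (y y0 : R) : `|Num.max y 0 - Num.max y0 0| <= `|y - y0|.
Proof.
have n1 := ler_norm (y - y0); have n2 := ler_norm (- (y - y0)); rewrite normrN in n2.
have n3 := normr_ge0 (y - y0).
rewrite ler_norml; case: (leP y 0) => h1; case: (leP y0 0) => h2;
  rewrite ?(maxEge, maxElt); rewrite ?h1 ?h2 /=; 
  (repeat match goal with |- context [if ?b then _ else _] => case: ifP => ? end);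
  apply/andP; split; lra.
Qed.

Definition primx (y : R) := prim (Num.max y 0).

Lemma primx_cont : continuous primx.
Proof.
move=> y0; apply/cvgrPdist_lt => eps eps0.
set M := Num.max y0 0 + 1.
set K := `|c 0| + `|c M| + 1.
have K0 : 0 < K by rewrite ltr_pwDr // addr_ge0.
have r0 : 0 < Num.min 1 (eps / K) by rewrite lt_min ltr01 divr_gt0.
near=> y.
have hy : ball y0 (Num.min 1 (eps / K)) y.
  near: y; by apply/nbhs_ballP; exists (Num.min 1 (eps / K)).
rewrite /ball /= lt_min in hy; case/andP: hy => hy1 hy2.
have ml := max0_lip y y0.
have a0 : 0 <= Num.max y0 0 by rewrite le_max lexx orbT.
have b0 : 0 <= Num.max y 0 by rewrite le_max lexx orbT.
have aM : Num.max y0 0 <= M by rewrite /M lerDl.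
have bM : Num.max y 0 <= M.
  have hm : y0 <= Num.max y0 0 by rewrite le_max lexx.
  have h := ler_norm (y - y0); rewrite distrC in hy1.
  rewrite /M ge_max; apply/andP; split; lra.
have := prim_lip b0 a0 bM aM; rewrite /primx => h.
rewrite (le_lt_trans h) //.
have : `|Num.max y0 0 - Num.max y 0| < eps / K.
  by rewrite distrC (le_lt_trans ml) // distrC.
rewrite ltr_pdivlMr // => h2.
apply: le_lt_trans h2; rewrite [X in _ <= X]mulrC; apply: ler_wpM2r; [exact: normr_ge0 | by rewrite /K lerDl].
Unshelve. all: by end_near.
Qed.
End Prim.
Section Net.
Variables (V E : finType) (src dst : E -> V) (vo vd : V) (R : realType).
Local Notation P := (path_t src dst vo vd).
Implicit Types f g : {ffun P -> R}.

Lemma path_uniq (p : P) : uniq (ssval p).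
Proof.
have := ssvalP p; rewrite /odpaths mem_filter => /andP[_].
rewrite /uniq_edge_seqs mem_undup => /flattenP[s /mapP[A _ ->]].
by rewrite mem_permutations => /perm_uniq ->; apply: enum_uniq.
Qed.

Lemma pc_sum (c : E -> R -> R) f p :
  path_cost c f p = \sum_e (e \in ssval p)%:R * c e (edge_flow f e).
Proof.
rewrite /path_cost big_uniq ?path_uniq //= big_mkcond /=.
by apply: eq_bigr => e _; case: (e \in ssval p); rewrite ?mul1r ?mul0r.
Qed.

Lemma exch (w : P -> R) (F : E -> R) :
  \sum_(p : P) w p * (\sum_e (e \in ssval p)%:R * F e) =
  \sum_e F e * (\sum_(p : P | e \in ssval p) w p).
Proof.
under eq_bigr do rewrite big_distrr /=.
rewrite exchange_big /=; apply: eq_bigr => e _.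
rewrite big_distrr /= [in RHS]big_mkcond /=; apply: eq_bigr => p _.
by case: (e \in ssval p); rewrite ?mul1r ?mul0r ?mulr0 // mulrC.
Qed.

Lemma edge_flow_ge0 f : feasible f -> forall e, 0 <= edge_flow f e.
Proof. by move=> [f0 _] e; apply: sumr_ge0 => p _. Qed.

Definition WEc (c : E -> R -> R) f :=
  feasible f /\ forall p, 0 < f p -> forall r, path_cost c f p <= path_cost c f r.

Lemma pos_exists f : feasible f -> exists p, 0 < f p.
Proof.
move=> [f0 f1]; apply/not_existsP => H.
have : \sum_p f p <= 0.
  apply: sumr_le0 => p _; rewrite leNgt; apply/negP => h; exact: (H p).
by rewrite f1 ler10.
Qed.

Lemma WE_opt (c : E -> R -> R) f g : WEc c f -> feasible g ->
  \sum_p f p * path_cost c f p <= \sum_p g p * path_cost c f p.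
Proof.
move=> [[f0 f1] Hf] [g0 g1].
have [p0 hp0] := pos_exists (conj f0 f1).
set mu := path_cost c f p0.
have -> : \sum_p f p * path_cost c f p = \sum_p f p * mu.
  apply: eq_bigr => p _; have [fp|] := ltP 0 (f p).
    by congr (_ * _); apply/eqP; rewrite eq_le Hf // Hf.
  move=> fp; have -> : f p = 0 by (apply/eqP; rewrite eq_le fp f0).
  by rewrite !mul0r.
rewrite -big_distrl /= f1 mul1r.
apply: (@le_trans _ _ (\sum_p g p * mu)).
  by rewrite -big_distrl /= g1 mul1r.
by apply: ler_sum => p _; apply: ler_wpM2l => //; apply: Hf.
Qed.

Lemma mono_eq (c : E -> R -> R)
  (cincr : forall e x y, 0 <= x -> x < y -> c e x < c e y) f g :
  feasible f -> feasible g ->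
  \sum_p (f p - g p) * (path_cost c f p - path_cost c g p) <= 0 ->
  forall e, edge_flow f e = edge_flow g e.
Proof.
move=> Ff Fg H.
have E1 : \sum_p (f p - g p) * (path_cost c f p - path_cost c g p) =
  \sum_e (c e (edge_flow f e) - c e (edge_flow g e)) * (edge_flow f e - edge_flow g e).
  have := exch (fun p => f p - g p) (fun e => c e (edge_flow f e) - c e (edge_flow g e)).
  rewrite /edge_flow; under [in RHS]eq_bigr do rewrite sumrB.
  move=> <-; apply: eq_bigr => p _; rewrite !pc_sum -sumrB; congr (_ * _).
  by apply: eq_bigr => e _; rewrite mulrBr.
have tge0 e : 0 <= (c e (edge_flow f e) - c e (edge_flow g e)) * (edge_flow f e - edge_flow g e).
  have f0 := edge_flow_ge0 Ff e; have g0 := edge_flow_ge0 Fg e.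
  case: (ltgtP (edge_flow f e) (edge_flow g e)) => h.
  - apply: mulr_le0 ; rewrite subr_le0 ?ltW //; exact: cincr.
  - apply: mulr_ge0; rewrite subr_ge0 ?ltW //; exact: cincr.
  - by rewrite h !subrr mulr0.
move=> e; rewrite E1 in H.
have /psumr_eq0P Z : \sum_e (c e (edge_flow f e) - c e (edge_flow g e)) * (edge_flow f e - edge_flow g e) = 0.
  by apply/eqP; rewrite eq_le H sumr_ge0.
have := Z (fun e _ => tge0 e) e isT.
have f0 := edge_flow_ge0 Ff e; have g0 := edge_flow_ge0 Fg e.
case: (ltgtP (edge_flow f e) (edge_flow g e)) => h //.
- move/eqP; rewrite mulf_eq0 !subr_eq0 => /orP[/eqP|/eqP] h'.
    by have := cincr e _ _ f0 h; rewrite h' ltxx.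
  by move: h; rewrite h' ltxx.
- move/eqP; rewrite mulf_eq0 !subr_eq0 => /orP[/eqP|/eqP] h'.
    by have := cincr e _ _ g0 h; rewrite h' ltxx.
  by move: h; rewrite h' ltxx.
Qed.
End Net.

Lemma cont_delta (R : realType) (c : R -> R) (cc : {within `[0%R, +oo[, continuous c}) x (eta : R) :
  0 <= x -> 0 < eta -> \forall eps \near (0:R), forall y, 0 <= y -> `|x - y| <= `|eps| -> `|c x - c y| < eta.
Proof.
move=> x0 eta0.
move/subspace_continuousP: cc => /(_ x) H.
have : `[0%R, +oo[ x by rewrite /= in_itv /= x0.
move/H/cvgrPdist_lt/(_ _ eta0).
rewrite near_withinE. move/nbhs_ballP => [d d0 Hd].
apply/nbhs_ballP; exists d => // e; rewrite /ball /= sub0r normrN => ed y y0 xy.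
apply: Hd; first by rewrite /ball /=; apply: le_lt_trans xy ed.
by rewrite /= in_itv /= y0.
Qed.

Lemma prim_upper (R : realType) (c : R -> R) (cc : {within `[0%R, +oo[, continuous c})
  (ci : forall x y, 0 <= x -> x < y -> c x < c y) a b :
  0 <= a -> 0 <= b -> prim c b - prim c a <= (b - a) * c b.
Proof.
move=> a0 b0; case: (leP a b) => ab.
  by have /andP[] := prim_sandwich cc ci a0 ab.
have /andP[h _] := prim_sandwich cc ci b0 (ltW ab).
by rewrite -opprB -[b - a]opprB mulNr lerN2.
Qed.

Section Exist.
Variables (V E : finType) (src dst : E -> V) (vo vd : V) (R : realType).
Local Notation P := (path_t src dst vo vd).
Implicit Types f g h : {ffun P -> R}.
Variable c : E -> R -> R.
Hypothesis ccont : forall e, {within `[0%R, +oo[, continuous (c e)}.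
Hypothesis cincr : forall e x y, 0 <= x -> x < y -> c e x < c e y.

Definition Phi g := \sum_e primx (c e) (edge_flow g e).

Lemma sum_ind (Q : pred P) (r : P) : \sum_(q | Q q) (q == r)%:R = (Q r)%:R :> R.
Proof.
rewrite big_mkcond (bigD1 r) //= big1 => [|q /negPf ->]; last by case: (Q q).
by rewrite eqxx addr0; case: (Q r).
Qed.

Definition pert h (eps : R) (r p : P) : {ffun P -> R} :=
  [ffun q => h q + eps * ((q == r)%:R - (q == p)%:R)].

Lemma pert_feas h eps r p : feasible h -> r != p -> 0 <= eps -> eps <= h p ->
  feasible (pert h eps r p).
Proof.
move=> [h0 h1] rp e0 ep; split.
  move=> q; rewrite ffunE; have [->|qr] := eqVneq q r.
    by rewrite (negPf rp) subr0 mulr1 addr_ge0.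
  have [->|qp] := eqVneq q p; first by rewrite sub0r mulrN1 subr_ge0.
  by rewrite ?(negPf qr) ?(negPf qp) subr0 mulr0 addr0.
rewrite /pert; under eq_bigr do rewrite ffunE.
rewrite big_split /= h1 -big_distrr /= sumrB !sum_ind /= subrr mulr0 addr0 //.
Qed.

Lemma pert_flow h eps r p e :
  edge_flow (pert h eps r p) e =
  edge_flow h e + eps * ((e \in ssval r)%:R - (e \in ssval p)%:R).
Proof.
rewrite /edge_flow /pert; under eq_bigr do rewrite ffunE.
by rewrite big_split /= -big_distrr /= sumrB !sum_ind.
Qed.



Lemma Phi_diff h g : feasible h -> feasible g ->
  Phi g - Phi h <= \sum_e (edge_flow g e - edge_flow h e) * c e (edge_flow g e).
Proof.
move=> Fh Fg; rewrite /Phi -sumrB; apply: ler_sum => e _.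
have a0 := edge_flow_ge0 Fh e; have b0 := edge_flow_ge0 Fg e.
rewrite /primx (max_l a0) (max_l b0); exact: (prim_upper (@ccont e) (@cincr e)).
Qed.

Lemma fo h : feasible h -> (forall g, feasible g -> Phi h <= Phi g) -> WEc c h.
Proof.
move=> Fh Hmin; split => // p hp r.
rewrite leNgt; apply/negP => hlt.
have rp : r != p by apply/eqP => ep; move: hlt; rewrite ep ltxx.
set gap := path_cost c h p - path_cost c h r.
have gap0 : 0 < gap by rewrite subr_gt0.
set N := #|E|%:R : R.
have N0 : 0 <= N by [].
set eta := gap / (2 * (N + 1)).
have eta0 : 0 < eta by rewrite divr_gt0 // mulr_gt0 // ltr_wpDl.
have Hnear : \forall eps \near (0:R), forall e, forall y, 0 <= y ->
    `|edge_flow h e - y| <= `|eps| -> `|c e (edge_flow h e) - c e y| < eta.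
  eapply filter_forall; [exact: nbhs_filter|] => e; apply: cont_delta (@ccont e) _ _ _ eta0; exact: edge_flow_ge0.
move/nbhs_ballP: Hnear => [rho rho0 Hrho].
set eps := Num.min (rho / 2) (h p).
have eps0 : 0 < eps by rewrite lt_min hp divr_gt0.
have epsp : eps <= h p by rewrite ge_min lexx orbT.
have epsr : `|eps| < rho.
  rewrite gtr0_norm //; have : eps <= rho / 2 by rewrite ge_min lexx.
  lra.
have Fg := pert_feas Fh rp (ltW eps0) epsp.
set g := pert h eps r p.
have Hc e : `|c e (edge_flow h e) - c e (edge_flow g e)| < eta.
  apply: (Hrho eps) => //; first by rewrite /ball /= sub0r normrN.
    exact: edge_flow_ge0.
  rewrite /g pert_flow opprD addrA subrr sub0r normrN normrM ler_piMr //.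
  by case: (e \in ssval r); case: (e \in ssval p); rewrite /= ?subrr ?subr0 ?sub0r ?normrN ?normr0 ?normr1.
have key q : `|path_cost c g q - path_cost c h q| <= N * eta.
  rewrite !pc_sum -sumrB (le_trans (ler_norm_sum _ _ _)) //.
  have -> : N * eta = \sum_(e : E) eta by rewrite sumr_const /N mulr_natl.
  apply: ler_sum => e _; rewrite -mulrBr normrM.
  case: (e \in ssval q); rewrite ?normr1 ?normr0 ?mul1r ?mul0r; last exact: ltW.
  by rewrite distrC; apply: ltW.
have H1 := Hmin g Fg.
have H2 := Phi_diff Fh Fg.
have H3 : \sum_e (edge_flow g e - edge_flow h e) * c e (edge_flow g e) =
    eps * (path_cost c g r - path_cost c g p).
  rewrite !pc_sum -sumrB big_distrr /=; apply: eq_bigr => e _.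
  rewrite /g pert_flow addrAC subrr add0r -mulrA; congr (_ * _).
  by rewrite mulrBl.
have kr := key r; have kp := key p.
rewrite ler_norml in kr; rewrite ler_norml in kp.
case/andP: kr => _ kr; case/andP: kp => kp _.
have : path_cost c g r - path_cost c g p < 0.
  have e2 : eta * (2 * (N + 1)) = gap.
    by rewrite /eta mulfVK // mulf_neq0 // gt_eqF // ltr_wpDl.
  have : 2 * (N * eta) < gap by rewrite -e2; nra.
  rewrite /gap in e2 *; lra.
move=> neg.
have : eps * (path_cost c g r - path_cost c g p) < 0 by rewrite pmulr_rlt0.
lra.
Qed.
End Exist.

Section Min.
Variables (V E : finType) (src dst : E -> V) (vo vd : V) (R : realType).
Local Notation P := (path_t src dst vo vd).
Implicit Types f g h : {ffun P -> R}.
Variable c : E -> R -> R.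
Hypothesis ccont : forall e, {within `[0%R, +oo[, continuous (c e)}.
Hypothesis cincr : forall e x y, 0 <= x -> x < y -> c e x < c e y.

Local Notation n := #|P|.
Definition toF (v : 'rV[R]_n) : {ffun P -> R} := [ffun p => v ord0 (enum_rank p)].
Definition fromF g : 'rV[R]_n := \row_i g (enum_val i).

Lemma toFK g : toF (fromF g) = g.
Proof. by apply/ffunP => p; rewrite !ffunE mxE enum_rankK. Qed.

Lemma sum_rank (F : 'I_n -> R) : \sum_i F i = \sum_(p : P) F (enum_rank p).
Proof.
rewrite (reindex (@enum_rank P)) //; apply: onW_bij.
exact: (Bijective (@enum_rankK P) (@enum_valK P)).
Qed.

Definition A : set 'rV[R]_n :=
  [set v | forall i, `[0%R, 1%R] (v ord0 i)] `&` [set v | \sum_i v ord0 i = 1].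

Lemma A_feas v : A v -> feasible (toF v).
Proof.
move=> [Hb Hs]; split.
  by move=> p; rewrite ffunE; have := Hb (enum_rank p); rewrite /= in_itv /= => /andP[].
by rewrite -Hs sum_rank; apply: eq_bigr => p _; rewrite ffunE.
Qed.

Lemma feas_A g : feasible g -> A (fromF g).
Proof.
move=> [g0 g1]; split.
  move=> i; rewrite /= mxE in_itv /= g0 /=.
  rewrite -g1 (bigD1 (enum_val i)) //= lerDl; exact: sumr_ge0.
by rewrite /= sum_rank -[RHS]g1; apply: eq_bigr => p _; rewrite mxE enum_rankK.
Qed.

Lemma sum_cont : continuous (fun v : 'rV[R]_n => \sum_i v ord0 i).
Proof.
apply: continuous_big; first exact: add_continuous.
move=> i _; exact: coord_continuous.
Qed.

Lemma A_compact : compact A.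
Proof.
apply: compact_closedI.
  have := @rV_compact R n (fun _ => `[0%R, 1%R]) (fun _ => @segment_compact R 0 1). done.
apply: (@preimage_closed _ _ (fun v : 'rV[R]_n => \sum_i v ord0 i) [set x | x = 1]); last exact: closed_eq.
by move=> v _; apply: sum_cont.
Qed.

Definition Phit (v : 'rV[R]_n) :=
  \sum_e primx (c e) (\sum_(p : P | e \in ssval p) v ord0 (enum_rank p)).

Lemma PhitE v : Phit v = Phi c (toF v).
Proof.
rewrite /Phit /Phi /edge_flow; apply: eq_bigr => e _; congr primx.
by apply: eq_bigr => p _; rewrite ffunE.
Qed.

Lemma Phit_cont : continuous Phit.
Proof.
apply: continuous_big; first exact: add_continuous.
move=> e _ v.
apply: (continuous_comp (f := fun v : 'rV[R]_n => \sum_(p : P | e \in ssval p) v ord0 (enum_rank p))).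
  apply: continuous_big; first exact: add_continuous.
  by move=> p _; exact: coord_continuous.
exact: (primx_cont (@ccont e) (@cincr e)).
Qed.

Lemma min_exists f0 : feasible f0 ->
  exists h, feasible h /\ forall g, feasible g -> Phi c h <= Phi c g.
Proof.
move=> F0.
have A0 : A !=set0 by exists (fromF f0); exact: feas_A.
have [v vA vmin] := compact_EVT_min A0 A_compact (continuous_subspaceT Phit_cont).
exists (toF v); split; first by apply: A_feas; rewrite inE in vA.
move=> g Fg; rewrite -PhitE -(toFK g) -PhitE; apply: vmin.
by rewrite inE; apply: feas_A.
Qed.

Lemma WE_exists f0 : feasible f0 -> exists h, WEc c h.
Proof.
move=> /min_exists [h [Fh Hh]]; exists h.
exact: (fo ccont cincr Fh Hh).
Qed.
End Min.

Section Main.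
Variables (V E : finType) (src dst : E -> V) (vo vd : V) (R : realType).
Local Notation P := (path_t src dst vo vd).
Implicit Types f g h : {ffun P -> R}.

Lemma exp_cost_pc m (C : 'I_m -> E -> R -> R) (w : {ffun 'I_m -> R}) f p :
  exp_cost C w f p = path_cost (fun e x => \sum_s w s * C s e x) f p.
Proof.
rewrite /exp_cost /path_cost; under eq_bigr do rewrite big_distrr /=.
by rewrite exchange_big.
Qed.

Lemma WE_WEc m (C : 'I_m -> E -> R -> R) w f :
  WE C w f <-> WEc (fun e x => \sum_s w s * C s e x) f.
Proof.
split=> [[Ff H]|[Ff H]]; split => // p hp r; move: (H p hp r); by rewrite !exp_cost_pc.
Qed.

Lemma delta_cost m (C : 'I_m -> E -> R -> R) s0 f p :
  exp_cost C (delta R s0) f p = path_cost (C s0) f p.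
Proof.
rewrite /exp_cost (bigD1 s0) //= big1 => [|s /negPf ns].
  by rewrite ffunE eqxx mul1r addr0.
by rewrite ffunE ns mul0r.
Qed.

Lemma WE_delta m (C : 'I_m -> E -> R -> R) s0 f :
  WE C (delta R s0) f <-> WEc (C s0) f.
Proof.
split=> [[Ff H]|[Ff H]]; split => // p hp r; move: (H p hp r); by rewrite !delta_cost.
Qed.

Lemma cross (f g a b : P -> R) :
  \sum_p (f p - g p) * (a p - b p) =
  (\sum_p f p * a p - \sum_p g p * a p) - (\sum_p f p * b p - \sum_p g p * b p).
Proof.
rewrite -!sumrB; apply: eq_bigr => p _; rewrite mulrBl !mulrBr; lra.
Qed.

Lemma bc_expr m (C : 'I_m -> E -> R -> R) (w : {ffun 'I_m -> R}) g p r :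
  \sum_s (path_cost (C s) g p - path_cost (C s) g r) * w s =
  exp_cost C w g p - exp_cost C w g r.
Proof.
rewrite /exp_cost -sumrB; apply: eq_bigr => s _; rewrite mulrBl; lra.
Qed.

Lemma two_state (d psi phi : {ffun 'I_2 -> R}) :
  simplex psi -> simplex phi -> psi != phi ->
  \sum_s d s * psi s = 0 -> \sum_s d s * phi s = 0 -> forall s, d s = 0.
Proof.
move=> [_ s1] [_ t1] npp h1 h2.
rewrite !big_ord_recl !big_ord0 !addr0 in s1 t1 h1 h2.
set i1 := lift ord0 ord0 in s1 t1 h1 h2.
have ne : psi ord0 != phi ord0.
  apply: contraNneq npp => e0; apply/eqP/ffunP => s.
  have : (s == ord0) || (s == i1).
    by case: s => [[|[|k]] Hk] //.
  case/orP => /eqP ->; first exact: e0.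
  lra.
have dd : d ord0 = d i1.
  have : (d ord0 - d i1) * (psi ord0 - phi ord0) = 0.
    have e1 : psi i1 = 1 - psi ord0 by lra.
    have e2 : phi i1 = 1 - phi ord0 by lra.
    rewrite e1 in h1; rewrite e2 in h2; nra.
  move/eqP; rewrite mulf_eq0 => /orP[|]; first by rewrite subr_eq0 => /eqP.
  by rewrite subr_eq0 (negPf ne).
have d0 : d ord0 = 0.
  have e1 : psi i1 = 1 - psi ord0 by lra.
  rewrite -dd e1 in h1; nra.
move=> s; have : (s == ord0) || (s == i1) by case: s => [[|[|k]] Hk] //.
by case/orP => /eqP ->; rewrite -?dd d0.
Qed.

End Main.

Lemma ffun_pos_exists (I : finType) (R : realType) (w : {ffun I -> R}) :
  (forall s, 0 <= w s) -> \sum_s w s = 1 -> exists s, 0 < w s.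
Proof.
move=> w0 w1; apply/not_existsP => H.
have : \sum_s w s <= 0.
  apply: sumr_le0 => s _; rewrite leNgt; apply/negP => h; exact: (H s).
by rewrite w1 ler10.
Qed.

Lemma D_incr (R : realType) (E : finType) m (C : 'I_m -> E -> R -> R) (w : {ffun 'I_m -> R})
  (HCincr : forall s e x y, (0 <= x)%R -> (x < y)%R -> (C s e x < C s e y)%R) :
  simplex w -> forall e x y, 0 <= x -> x < y ->
  \sum_s w s * C s e x < \sum_s w s * C s e y.
Proof.
move=> [w0 w1] e x y x0 xy; rewrite -subr_gt0 -sumrB.
have [s0 hs0] := ffun_pos_exists w0 w1.
rewrite (bigD1 s0) //=; apply: ltr_pwDl.
  by rewrite -mulrBr mulr_gt0 // subr_gt0 HCincr // x0.
apply: sumr_ge0 => s _; rewrite -mulrBr mulr_ge0 // subr_ge0 ltW // HCincr // x0.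
Qed.


End Aux.
Import Aux.

Theorem lemma7 (V E : finType) (src dst : E -> V) (vo vd : V) (R : realType)
  (C : 'I_2 -> E -> R -> R)
  (HCcont : forall s e, {within `[0%R, +oo[, continuous (C s e)})
  (HCnonneg : forall s e x, (0 <= x)%R -> (0 <= C s e x)%R)
  (HCincr : forall s e x y, (0 <= x)%R -> (x < y)%R -> (C s e x < C s e y)%R)
  (phi : {ffun 'I_2 -> R}) (Hphi : simplex phi) :
  (exists f : {ffun path_t src dst vo vd -> R}, WE C phi f /\ Finf C f) ->
  forall fh : {ffun path_t src dst vo vd -> R}, WE C phi fh ->
    belief_cond C fh phi /\
    (forall psi : {ffun 'I_2 -> R}, simplex psi -> belief_cond C fh psi -> psi = phi).
Proof.
move=> [f [WEf [_ [nWE1 [_ Hruse]]]]] fh WEfh.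
have BC : belief_cond C fh phi.
  case: (WEfh) => Ffh H; split => p r hp hr; rewrite bc_expr.
    by apply/eqP; rewrite subr_eq0 eq_le !H.
  by rewrite subr_le0 H.
split => // psi Hpsi BCpsi.
case: (eqVneq psi phi) => // npp; exfalso.
set D := fun e x => \sum_s phi s * C s e x.
have Dincr := D_incr HCincr Hphi.
have WEf' : WEc D f by apply/WE_WEc.
have WEfh' : WEc D fh by apply/WE_WEc.
have Ff := WEf'.1; have Ffh := WEfh'.1.
have Heq : forall e, edge_flow f e = edge_flow fh e.
  apply: (mono_eq (c := D)) => //.
  rewrite cross; have := WE_opt WEf' Ffh; have := WE_opt WEfh' Ff; lra.
have pc_eq : forall c p, path_cost c f p = path_cost c fh p.
  by move=> c p; rewrite /path_cost; apply: eq_bigr => e _; rewrite Heq.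
have exp_eq : forall w p, exp_cost C w f p = exp_cost C w fh p.
  by move=> w p; rewrite /exp_cost; apply: eq_bigr => s _; rewrite pc_eq.
have [p0 hp0] := pos_exists Ffh.
set cs := fun s p => path_cost (C s) fh p.
have Hused : forall q, 0 < fh q -> forall s, cs s q = cs s p0.
  move=> q hq s; apply/eqP; rewrite -subr_eq0; apply/eqP.
  pose d := [ffun s => cs s q - cs s p0].
  have h1 : \sum_s d s * psi s = 0.
    by rewrite -[RHS](BCpsi.1 q p0 hq hp0); apply: eq_bigr => s' _; rewrite ffunE.
  have h2 : \sum_s d s * phi s = 0.
    by rewrite -[RHS](BC.1 q p0 hq hp0); apply: eq_bigr => s' _; rewrite ffunE.
  by have := two_state Hpsi Hphi npp h1 h2 s; rewrite ffunE.
have tot : forall c (g : {ffun path_t src dst vo vd -> R}), \sum_r g r * path_cost c g r =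
    \sum_e c e (edge_flow g e) * edge_flow g e.
  by move=> c g; under eq_bigr do rewrite pc_sum; rewrite exch.
have avg : forall s, \sum_r f r * cs s r = \sum_r fh r * cs s r.
  move=> s; rewrite /cs; under eq_bigr do rewrite -pc_eq.
  by rewrite !tot; apply: eq_bigr => e _; rewrite Heq.
have avgp0 : forall s, \sum_r fh r * cs s r = cs s p0.
  move=> s; rewrite (eq_bigr (fun r => fh r * cs s p0)) => [|r _].
    by rewrite -big_distrl /= Ffh.2 mul1r.
  case: (ltP 0 (fh r)) => h; first by rewrite Hused.
  have -> : fh r = 0 by apply/eqP; rewrite eq_le h Ffh.1.
  by rewrite !mul0r.
have Hge : forall r, 0 <= \sum_s (cs s r - cs s p0) * psi s.
  move=> r; case: (ltP 0 (fh r)) => h.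
    by rewrite (BCpsi.1 r p0 h hp0).
  have fr0 : fh r = 0 by apply/eqP; rewrite eq_le h Ffh.1.
  have := BCpsi.2 p0 r hp0 fr0.
  have -> : \sum_s (path_cost (C s) fh p0 - path_cost (C s) fh r) * psi s =
     - \sum_s (cs s r - cs s p0) * psi s.
    by rewrite -sumrN; apply: eq_bigr => s _; rewrite -mulNr opprB.
  by rewrite oppr_le0.
have Havg : \sum_r f r * \sum_s (cs s r - cs s p0) * psi s = 0.
  under eq_bigr do rewrite big_distrr /=.
  rewrite exchange_big /=; apply: big1 => s _.
  under eq_bigr do rewrite mulrA mulrBr.
  rewrite -big_distrl /= sumrB -big_distrl /= Ff.2 mul1r avg avgp0.
  by rewrite subrr mul0r.
have Hf0 : forall r, 0 < f r -> forall s, cs s r = cs s p0.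
  move=> r hr s; apply/eqP; rewrite -subr_eq0; apply/eqP.
  pose d := [ffun s => cs s r - cs s p0].
  have h1 : \sum_s d s * psi s = 0.
    have /psumr_eq0P Z : \sum_r f r * \sum_s (cs s r - cs s p0) * psi s = 0 by [].
    have := Z (fun r _ => mulr_ge0 (Ff.1 r) (Hge r)) r isT.
    move/eqP; rewrite mulf_eq0 (gt_eqF hr) /= => /eqP H0.
    by rewrite -[RHS]H0; apply: eq_bigr => s' _; rewrite ffunE.
  have h2 : \sum_s d s * phi s = 0.
    rewrite (eq_bigr (fun s => (path_cost (C s) fh r - path_cost (C s) fh p0) * phi s)).
      rewrite bc_expr; apply/eqP; rewrite subr_eq0 eq_le (WEfh.2 p0 hp0 r) andbT.
      by rewrite -!exp_eq (WEf.2 r hr p0).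
    by move=> s' _; rewrite ffunE.
  by have := two_state Hpsi Hphi npp h1 h2 s; rewrite ffunE.
have [h WEh] := WE_exists (HCcont ord0) (HCincr ord0) Ff.
have Fh := WEh.1.
have hsupp : forall q, 0 < h q -> 0 < f q.
  move=> q hq; apply: Hruse; exists h; split => //; exact/WE_delta.
have Hb : forall g : {ffun path_t src dst vo vd -> R}, feasible g ->
    (forall q, 0 < g q -> 0 < f q) ->
    \sum_q g q * path_cost (C ord0) f q = cs ord0 p0.
  move=> g Fg sg; rewrite (eq_bigr (fun q => g q * cs ord0 p0)) => [|q _].
    by rewrite -big_distrl /= Fg.2 mul1r.
  case: (ltP 0 (g q)) => hg; first by rewrite pc_eq -(Hf0 q (sg q hg) ord0).
  have -> : g q = 0 by apply/eqP; rewrite eq_le hg Fg.1.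
  by rewrite !mul0r.
have Heq2 : forall e, edge_flow h e = edge_flow f e.
  apply: (mono_eq (c := C ord0)) => //; first exact: HCincr.
  rewrite cross (Hb h Fh hsupp) (Hb f Ff (fun q hq => hq)).
  have := WE_opt WEh Ff; lra.
apply: nWE1; apply/WE_delta; split => // q hq r.
have pch : forall q, path_cost (C ord0) h q = path_cost (C ord0) f q.
  by move=> q'; rewrite /path_cost; apply: eq_bigr => e _; rewrite Heq2.
have [q' hq'] := pos_exists Fh.
have := WEh.2 q' hq' r; rewrite !pch.
rewrite !pc_eq; have e1 := Hf0 q hq ord0; have e2 := Hf0 q' (hsupp q' hq') ord0.
rewrite /cs /= in e1 e2; by rewrite e1 e2.
Qed.
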